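(* Suppose $\mathrm{char}(\mathbb{F})=0$. Then for every commutative unital $\mathbb{F}$-algebra $A$, $$\mathfrak{P}^{\mathrm{cu}}(A)=\ker\big(d:A\to\Omega^1(A)\big)=\mathcal{H}^0_{\mathrm{deR}}(A);$$ equivalently, for every affine scheme $S$ over $\mathbb{F}$, $\pi_0(S)=\mathcal{H}^0_{\mathrm{deR}}(S)$.
   Context: $\mathbb{F}$ is a field. For a commutative unital algebra $A$, $\mathfrak{P}^{\mathrm{cu}}(A)$ is the set of $a\in A$ such that for every commutative unital algebra $C$ and every unit-preserving morphism $\varphi:A\to C[x]$, $\varphi(a)$ is a constant polynomial (lies in $C\subseteq C[x]$); it is a unital subalgebra (the paper defines it via a universal pro-algebra $\mathfrak{M}^{\mathrm{cu}}_{A,\mathbb{F}[x]}$ and proves equality with this set). $d:A\to\Omega^1(A)$ is the universal derivation into the module of Kähler differentials of $A$ over $\mathbb{F}$, and $\mathcal{H}^0_{\mathrm{deR}}(A)$ is the degree-zero cohomology of the algebraic de Rham complex $\Omega(A)$, i.e. $\ker d$. For the affine scheme $S=\mathrm{Spec}(A)$, $\pi_0(S)$ denotes the affine scheme associated with $\mathfrak{P}^{\mathrm{cu}}(A)$ and $\mathcal{H}^0_{\mathrm{deR}}(S)=\mathcal{H}^0_{\mathrm{deR}}(A)$. *)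

(* Defs.v *)
From HB Require Import structures.
From mathcomp Require Import all_boot all_order all_algebra.
Set Implicit Arguments. Unset Strict Implicit. Unset Printing Implicit Defensive.
Import GRing.Theory.
Local Open Scope ring_scope.

Definition is_Falg_morph_to_poly (F : fieldType) (A C : comAlgType F)
    (phi : {rmorphism A -> {poly C}}) : Prop :=
  forall (k : F) (a : A), phi (k *: a) = (k *: (1 : C))%:P * phi a.

Definition Pcu (F : fieldType) (A : comAlgType F) (a : A) : Prop :=
  forall (C : comAlgType F) (phi : {rmorphism A -> {poly C}}),
    is_Falg_morph_to_poly phi -> exists c : C, phi a = c%:P.

Definition is_Fderivation (F : fieldType) (A : comAlgType F) (M : lmodType A)
    (D : A -> M) : Prop :=
  [/\ forall a b : A, D (a + b) = D a + D b,
      forall (k : F) (a : A), D (k *: a) = (k *: (1 : A)) *: D a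
    & forall a b : A, D (a * b) = a *: D b + b *: D a].

(* ker (d : A -> Omega^1(A)) = H^0_deR(A), described through the universal
   property of the universal derivation d: d a = 0 iff D a = 0 for every
   F-derivation D of A into any A-module. *)
Definition ker_d (F : fieldType) (A : comAlgType F) (a : A) : Prop :=
  forall (M : lmodType A) (D : A -> M), is_Fderivation D -> D a = 0.

(* Main.v *)
Set Warnings "-all".
From HB Require Import structures.
Require Import Defs.
From mathcomp Require Import all_boot all_order all_algebra.
Set Implicit Arguments. Unset Strict Implicit. Unset Printing Implicit Defensive.
Import GRing.Theory.
Local Open Scope ring_scope.

Section Sqz.
Variables (F : fieldType) (A : comAlgType F) (M : lmodType A).
Definition sqz : Type := (A * M)%type.
HB.instance Definition _ := GRing.Zmodule.on sqz.
Definition sqz_mul (x y : sqz) : sqz := (x.1 * y.1, x.1 *: y.2 + y.1 *: x.2).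
Definition sqz_one : sqz := (1, 0).
Lemma sqz_mulA : associative sqz_mul.
Proof.
move=> [a m] [b n] [c p]; rewrite /sqz_mul /=; congr (_, _); first by rewrite mulrA.
by rewrite !scalerDr !scalerA addrA (mulrC c a) (mulrC c b).
Qed.
Lemma sqz_mulC : commutative sqz_mul.
Proof. by move=> [a m] [b n]; rewrite /sqz_mul /= mulrC addrC. Qed.
Lemma sqz_mul1 : left_id sqz_one sqz_mul.
Proof. by move=> [a m]; rewrite /sqz_mul /= mul1r scale1r scaler0 addr0. Qed.
Lemma sqz_mulDl : left_distributive sqz_mul +%R.
Proof.
move=> [a m] [b n] [c p]; rewrite /sqz_mul /=; congr (_, _); first by rewrite mulrDl.
by rewrite scalerDl scalerDr addrACA.
Qed.
Lemma sqz_one_neq0 : sqz_one != 0.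
Proof. by apply/negP => /eqP [] /eqP; rewrite oner_eq0. Qed.
HB.instance Definition _ := GRing.Zmodule_isComNzRing.Build sqz
  sqz_mulA sqz_mulC sqz_mul1 sqz_mulDl sqz_one_neq0.
Definition sqz_scale (k : F) (x : sqz) : sqz := (k *: x.1, (k *: (1 : A)) *: x.2).
Lemma sqz_scalerA a b v : sqz_scale a (sqz_scale b v) = sqz_scale (a * b) v.
Proof.
case: v => [x m]; rewrite /sqz_scale /=; congr (_, _); first by rewrite scalerA.
by rewrite scalerA -scalerAl mul1r scalerA.
Qed.
Lemma sqz_scale1r : left_id 1 sqz_scale.
Proof. by case=> x m; rewrite /sqz_scale /= !scale1r. Qed.
Lemma sqz_scalerDr : right_distributive sqz_scale +%R.
Proof. by move=> a [x m] [y n]; rewrite /sqz_scale /= !scalerDr. Qed.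
Lemma sqz_scalerDl v : {morph sqz_scale^~ v : a b / a + b}.
Proof. by case: v => x m a b; rewrite /sqz_scale /= !scalerDl. Qed.
HB.instance Definition _ := GRing.Zmodule_isLmodule.Build F sqz
  sqz_scalerA sqz_scale1r sqz_scalerDr sqz_scalerDl.
Lemma sqz_scalerAl (k : F) (u v : sqz) : k *: (u * v) = (k *: u) * v.
Proof.
case: u v => [a m] [b n].
rewrite /GRing.scale /= /sqz_scale /GRing.mul /= /sqz_mul /=.
congr (_, _); first by rewrite scalerAl.
rewrite scalerDr !scalerA; congr (_ + _); first by rewrite -scalerAl mul1r.
by rewrite mulrC.
Qed.
HB.instance Definition _ := GRing.LSemiModule_isLSemiAlgebra.Build F sqz sqz_scalerAl.
HB.instance Definition _ := GRing.Lalgebra_isComAlgebra.Build F sqz.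
Lemma sqz_mulE (x y : sqz) : x * y = (x.1 * y.1, x.1 *: y.2 + y.1 *: x.2).
Proof. by []. Qed.
Lemma sqz_mulP (a b : A) (m n : M) : ((a, m) : sqz) * ((b, n) : sqz) = (a * b, a *: n + b *: m).
Proof. by []. Qed.
Lemma sqz_scaleP (k : F) (a : A) (m : M) : k *: ((a, m) : sqz) = (k *: a, (k *: (1 : A)) *: m).
Proof. by []. Qed.
Lemma sqz_scaleE (k : F) (x : sqz) : k *: x = (k *: x.1, (k *: (1 : A)) *: x.2).
Proof. by []. Qed.
Lemma sqz_addE (x y : sqz) : x + y = (x.1 + y.1, x.2 + y.2).
Proof. by []. Qed.
Lemma sqz_oppE (x : sqz) : - x = (- x.1, - x.2).
Proof. by []. Qed.
Lemma sqz_0E : (0 : sqz) = (0, 0).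
Proof. by []. Qed.
Lemma sqz_1E : (1 : sqz) = (1, 0).
Proof. by []. Qed.

Variables (D : A -> M) (hD : is_Fderivation D).
Definition phiD (a : A) : {poly sqz} := ((a, 0) : sqz)%:P + ((0, D a) : sqz)%:P * 'X.

Lemma D_add a b : D (a + b) = D a + D b. Proof. by case: hD. Qed.
Lemma D_sub a b : D (a - b) = D a - D b.
Proof. by apply/eqP; rewrite eq_sym subr_eq -D_add subrK. Qed.
Lemma D_mul a b : D (a * b) = a *: D b + b *: D a. Proof. by case: hD. Qed.
Lemma D_scale k a : D (k *: a) = (k *: (1 : A)) *: D a. Proof. by case: hD. Qed.
Lemma D_1 : D 1 = 0.
Proof.
have h := D_mul 1 1; rewrite mulr1 !scale1r in h.
by apply: (addrI (D 1)); rewrite addr0 -h.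
Qed.

Lemma phiD_sub : zmod_morphism phiD.
Proof.
move=> x y; rewrite /phiD D_sub opprD addrACA -mulNr -mulrDl -!polyCN -!polyCD.
by rewrite !sqz_addE !sqz_oppE /= !subr0.
Qed.

Lemma phiD_mul : monoid_morphism phiD.
Proof.
split.
  by rewrite /phiD D_1 -sqz_1E -sqz_0E polyC0 mul0r addr0.
move=> x y; rewrite /phiD mulrDr !mulrDl.
set c : sqz := (x, 0); set d : sqz := (0, D x); set e : sqz := (y, 0); set g : sqz := (0, D y).
have h1 : c%:P * (g%:P * 'X) = (c * g)%:P * 'X by rewrite mulrA polyCM.
have h2 : d%:P * 'X * e%:P = (d * e)%:P * 'X by rewrite mulrAC polyCM.
have h3 : d%:P * 'X * (g%:P * 'X) = (d * g)%:P * ('X * 'X).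
  by rewrite mulrACA polyCM.
have hdg : d * g = 0.
  by rewrite sqz_mulP mul0r !scale0r addr0.
rewrite h1 h2 h3 hdg polyC0 mul0r addr0 -polyCM -addrA -mulrDl -polyCD.
congr (_%:P + _%:P * 'X); rewrite ?sqz_mulP.
  by rewrite !scaler0 addr0.
by rewrite mul0r mulr0 !scaler0 add0r addr0 sqz_addE /= addr0 D_mul addrC.
Qed.

Definition phiH (h : is_Fderivation D) : A -> {poly sqz} := phiD.
HB.instance Definition _ := GRing.isZmodMorphism.Build A {poly sqz} (phiH hD) phiD_sub.
HB.instance Definition _ := GRing.isMonoidMorphism.Build A {poly sqz} (phiH hD) phiD_mul.

Lemma phiD_lin : is_Falg_morph_to_poly (phiH hD : {rmorphism A -> {poly sqz}}).
Proof.
move=> k a; rewrite /= /phiH /phiD mulrDr mulrA -!polyCM D_scale.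
by rewrite sqz_1E sqz_scaleP !sqz_mulP !scaler0 !addr0 mulr0 -scalerAl mul1r.
Qed.

Lemma phiD_coef1 a : (phiD a)`_1 = (0, D a).
Proof. by rewrite /phiD coefD coefC coefMX /= coefC add0r. Qed.
End Sqz.

Section Pullback.
Variables (R : pzRingType) (S : comNzRingType) (f : {rmorphism R -> S}).
Definition pb of {rmorphism R -> S} : Type := S.
HB.instance Definition _ := GRing.Zmodule.on (pb f).
Definition pb_scale (r : R) (s : pb f) : pb f := (f r * (s : S)).
Lemma pb_scalerA a b v : pb_scale a (pb_scale b v) = pb_scale (a * b) v.
Proof. by rewrite /pb_scale rmorphM mulrA. Qed.
Lemma pb_scale1r : left_id 1 pb_scale.
Proof. by move=> v; rewrite /pb_scale rmorph1 mul1r. Qed.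
Lemma pb_scalerDr : right_distributive pb_scale +%R.
Proof. by move=> a u v; rewrite /pb_scale mulrDr. Qed.
Lemma pb_scalerDl v : {morph pb_scale^~ v : a b / a + b}.
Proof. by move=> a b; rewrite /pb_scale rmorphD mulrDl. Qed.
HB.instance Definition _ := GRing.Zmodule_isLmodule.Build R (pb f)
  pb_scalerA pb_scale1r pb_scalerDr pb_scalerDl.
End Pullback.
Lemma deriv0_const (F : fieldType) (charF0 : [pchar F] =i pred0)
  (C : comAlgType F) (p : {poly C}) : p^`() = 0 -> p = (p`_0)%:P.
Proof.
move=> dp; apply/polyP => i; rewrite coefC; case: i => [|i] //=.
have := congr1 (fun q : {poly C} => q`_i) dp.
rewrite coef_deriv coef0 -scaler_nat => h.
have nz : (i.+1%:R : F) != 0.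
  by rewrite ((pcharf0P F).1 charF0).
by move/(congr1 ( *:%R (i.+1%:R : F)^-1)): h; rewrite scalerK // scaler0.
Qed.

Theorem mainTheorem13 (F : fieldType) (charF0 : [pchar F] =i pred0)
    (A : comAlgType F) :
  forall a : A, Pcu a <-> ker_d a.
Proof.
move=> a; split.
  move=> H M D hD.
  have [c hc] := H (sqz M) (phiH hD : {rmorphism A -> {poly sqz M}}) (phiD_lin hD).
  have h : (phiD D a)`_1 = (c%:P)`_1 := congr1 (fun p : {poly sqz M} => p`_1) hc.
  rewrite phiD_coef1 coefC /= in h.
  by have := congr1 snd h.
move=> H C phi hphi.
pose D (b : A) : @pb _ _ phi := (phi b)^`().
have hder : is_Fderivation D.
  split.
  - by move=> b c; rewrite /D rmorphD derivD.
  - move=> k b; rewrite /D hphi deriv_mulC.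
    rewrite [RHS]/GRing.scale /= /pb_scale.
    by rewrite hphi rmorph1 mulr1.
  - move=> b c; rewrite /D rmorphM derivM.
    by rewrite /GRing.scale /= /pb_scale addrC (mulrC (phi c)).
have := H (@pb _ _ phi) D hder; rewrite /D => h0.
by exists (phi a)`_0; apply: (deriv0_const charF0).
Qed.
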